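(* Let $\mathbf M=(M,\vee_{\mathbf M},(\sqsubseteq^n_{\mathbf M})_{n\ge1})$ be a multi-argument specialization semilattice, let $M^{<\omega}$ be the set of finite subsets of $M$, and define on $M\times M^{<\omega}$ the relations $\precsim$ and $\sim$ as in the context. Then: (i) $\precsim$ is reflexive and transitive on $M\times M^{<\omega}$, hence $\sim$ is an equivalence relation. (ii) The operation $K[a,\{b_1,\dots,b_h\}]=[a,\{a\vee_{\mathbf M}b_1\vee_{\mathbf M}\dots\vee_{\mathbf M}b_h\}]$ on $\sim$-classes is well defined (here $[\cdot]$ denotes $\sim$-class). (iii) $\sim$ is a congruence of the semilattice $(M,\vee_{\mathbf M})\times(M^{<\omega},\cup)$, so the quotient $\widetilde M=(M\times M^{<\omega})/\!\sim$ inherits a semilattice operation $\vee$, given by $[a,\{b_1,\dots,b_h\}]\vee[c,\{d_1,\dots,d_k\}]=[a\vee_{\mathbf M}c,\{b_1,\dots,b_h,d_1,\dots,d_k\}]$; moreover, with $\le$ the order induced by $\vee$, $[a,\{b_1,\dots,b_h\}]\le[c,\{d_1,\dots,d_k\}]$ if and only if $(a,\{b_1,\dots,b_h\})\precsim(c,\{d_1,\dots,d_k\})$.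
   Context: A multi-argument specialization semilattice is a join semilattice $(M,\vee)$ (order $a\le b$ iff $a\vee b=b$) with, for each $n\ge1$, an $(n+1)$-ary relation $a\sqsubseteq^n b_1,\dots,b_n$ (also written $a\sqsubseteq b_1,\dots,b_n$) such that: (M1) $a\sqsubseteq a$; (M2) $a\sqsubseteq b_1,\dots,b_n$ and $b_1\sqsubseteq c$ imply $a\sqsubseteq c,b_2,\dots,b_n$; (M3) $a\le b$ and $b\sqsubseteq c_1,\dots,c_m$ imply $a\sqsubseteq c_1,\dots,c_m$; (M4) $a\sqsubseteq b_1,\dots,b_n$ implies $a\sqsubseteq b_{\sigma1},\dots,b_{\sigma n}$ for every permutation $\sigma$; (M5) $a\sqsubseteq b_1,\dots,b_n,b_n$ implies $a\sqsubseteq b_1,\dots,b_n$; (M6) $a\sqsubseteq b_1,\dots,b_n$ implies $a\sqsubseteq b_1,\dots,b_n,b_{n+1}$; (M7) $a\sqsubseteq b_1,\dots,b_n$ and $a_1\sqsubseteq b_1,\dots,b_n$ imply $a\vee a_1\sqsubseteq b_1,\dots,b_n$. Define $(a,\{b_1,\dots,b_h\})\precsim(c,\{d_1,\dots,d_k\})$ iff both: (a1) there is $d\in M$ with $d\sqsubseteq_{\mathbf M}d_1,\dots,d_k$ and $a\le_{\mathbf M}c\vee_{\mathbf M}d$ (when $k=0$, i.e. the set $\{d_1,\dots,d_k\}$ is empty, this clause reads simply $a\le_{\mathbf M}c$); and (a2) for every $i\le h$ there is $j\le k$ with $b_i\sqsubseteq^1_{\mathbf M}d_j$. Define $x\sim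 y$ iff $x\precsim y$ and $y\precsim x$. *)

(* Defs.v *)
From mathcomp Require Import all_boot.
From mathcomp Require Import finmap.
Set Implicit Arguments. Unset Strict Implicit. Unset Printing Implicit Defensive.
Local Open Scope fset_scope.

(* The family of relations
   a ⊑^n b_1,...,b_n (n >= 1) is encoded by one predicate
   spec a [:: b_1; ...; b_n], only constrained on nonempty lists. *)

Definition leM (M : Type) (join : M -> M -> M) (a b : M) : Prop := join a b = b.

Definition is_semilattice (M : Type) (join : M -> M -> M) : Prop :=
  (forall a b c, join a (join b c) = join (join a b) c) /\
  (forall a b, join a b = join b a) /\
  (forall a, join a a = a).

Definition is_mss (M : eqType) (join : M -> M -> M) (spec : M -> seq M -> Prop) : Prop :=
  is_semilattice join /\
  (* M1 *) (forall a, spec a [:: a]) /\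
  (* M2 *) (forall a b1 bs c, spec a (b1 :: bs) -> spec b1 [:: c] -> spec a (c :: bs)) /\
  (* M3 *) (forall a b cs, cs <> [::] -> leM join a b -> spec b cs -> spec a cs) /\
  (* M4 *) (forall a bs bs', bs <> [::] -> perm_eq bs bs' -> spec a bs -> spec a bs') /\
  (* M5 *) (forall a bs bn, spec a (rcons (rcons bs bn) bn) -> spec a (rcons bs bn)) /\
  (* M6 *) (forall a bs b, bs <> [::] -> spec a bs -> spec a (rcons bs b)) /\
  (* M7 *) (forall a a1 bs, bs <> [::] -> spec a bs -> spec a1 bs -> spec (join a a1) bs).

Section Precsim.
Variables (M : choiceType) (join : M -> M -> M) (spec : M -> seq M -> Prop).

Definition prec (x y : M * {fset M}) : Prop :=
  let: (a, B) := x in let: (c, D) := y in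
  (if D == fset0 then leM join a c
   else exists d, spec d (enum_fset D) /\ leM join a (join c d)) /\
  (forall b, b \in B -> exists2 d, d \in D & spec b [:: d]).

Definition sim (x y : M * {fset M}) : Prop := prec x y /\ prec y x.

Definition Kop (x : M * {fset M}) : M * {fset M} :=
  (x.1, [fset (foldr join x.1 (enum_fset x.2))]).

Definition pjoin (x y : M * {fset M}) : M * {fset M} :=
  (join x.1 y.1, x.2 `|` y.2).
End Precsim.

(* Main.v *)
Require Import Defs.
From mathcomp Require Import all_boot.
From mathcomp Require Import finmap.
Local Open Scope fset_scope.
Set Implicit Arguments. Unset Strict Implicit.

Ltac dHM HM := case: HM => [[jA [jC jI]] [M1 [M2 [M3 [M4 [M5 [M6 M7]]]]]]].

Lemma le_trans' (M : Type) (j : M -> M -> M) : is_semilattice j ->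
  forall a b c, leM j a b -> leM j b c -> leM j a c.
Proof. move=> [jA [jC jI]] a b c; rewrite /leM => h1 h2. by rewrite -h2 jA h1. Qed.

Lemma le_lub (M : Type) (j : M -> M -> M) : is_semilattice j ->
  forall a b c, leM j a c -> leM j b c -> leM j (j a b) c.
Proof. move=> [jA [jC jI]] a b c; rewrite /leM => h1 h2. by rewrite -jA h2 h1. Qed.

Lemma le_jl (M : Type) (j : M -> M -> M) : is_semilattice j ->
  forall a b, leM j a (j a b).
Proof. move=> [jA [jC jI]] a b; rewrite /leM. by rewrite jA jI. Qed.

Lemma le_jr (M : Type) (j : M -> M -> M) : is_semilattice j ->
  forall a b, leM j b (j a b).
Proof. move=> [jA [jC jI]] a b; rewrite /leM. by rewrite jA (jC b a) -jA jI. Qed.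

Lemma le_refl' (M : Type) (j : M -> M -> M) : is_semilattice j ->
  forall a, leM j a a.
Proof. by move=> [jA [jC jI]] a; rewrite /leM. Qed.

Lemma le_mono (M : Type) (j : M -> M -> M) : is_semilattice j ->
  forall a b c d, leM j a c -> leM j b d -> leM j (j a b) (j c d).
Proof.
move=> S a b c d h1 h2; apply: le_lub => //.
  by apply: (le_trans' S h1); apply: le_jl.
by apply: (le_trans' S h2); apply: le_jr.
Qed.


Lemma spec_grow (M : eqType) (j : M -> M -> M) spec : is_mss j spec ->
  forall w s a, s <> [::] -> spec a s -> spec a (s ++ w).
Proof.
move=> HM; dHM HM; elim=> [|y w IH] s a ne h; first by rewrite cats0.
rewrite -cat_rcons; apply: IH; first by case: (s).
exact: M6.
Qed.

Lemma spec_drop1 (M : eqType) (j : M -> M -> M) spec : is_mss j spec ->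
  forall a x s, x \in s -> spec a (x :: s) -> spec a s.
Proof.
move=> HM; dHM HM => a x s xs h.
have p := perm_to_rem xs.
have ne : s <> [::] by move=> e; rewrite e in xs.
apply: (M4 _ (rcons (rem x s) x)); first by case: (rem x s).
  by rewrite perm_rcons perm_sym.
apply: M5; apply: (M4 _ (x :: s)) => //.
by rewrite perm_sym perm_rcons perm_cons perm_rcons perm_sym.
Qed.

Lemma spec_mono (M : eqType) (j : M -> M -> M) spec : is_mss j spec ->
  forall a s t, s <> [::] -> {subset s <= t} -> spec a s -> spec a t.
Proof.
move=> HM a s t ne sub h.
have : spec a (s ++ t) by apply: (spec_grow HM).
move: sub; clear ne h.
elim: s => [|x s IH] sub h2; first exact: h2.
have xt : x \in t by apply: sub; rewrite inE eqxx.
apply: IH.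
  by move=> z zs; apply: sub; rewrite inE zs orbT.
apply: (spec_drop1 HM (x := x)) => //; by rewrite mem_cat xt orbT.
Qed.

Lemma spec_repl (M : eqType) (j : M -> M -> M) spec : is_mss j spec ->
  forall a s t, s <> [::] -> spec a s ->
  (forall b, b \in s -> exists2 d, d \in t & spec b [:: d]) -> spec a t.
Proof.
move=> HM a s t ne h hb.
suff H : forall rest P, {subset P <= t} -> P ++ rest <> [::] -> spec a (P ++ rest) ->
  (forall b, b \in rest -> exists2 d, d \in t & spec b [:: d]) -> spec a t.
  exact: (H s [::]).
have HM' := HM; dHM HM'.
elim=> [|b rest IH] P sub ne' h' hb'.
  rewrite cats0 in ne' h'; exact: (spec_mono HM ne' sub h').
have h2 : spec a (b :: P ++ rest).
  apply: (M4 _ (P ++ b :: rest)) => //.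
  rewrite -[b :: rest]cat1s perm_catCA; exact: perm_refl.
have [d dt hd] := hb' b (mem_head _ _).
have h3 := M2 _ _ _ _ h2 hd.
apply: (IH (d :: P)) => //.
- by move=> z; rewrite inE => /orP [/eqP -> //|]; apply: sub.
- by move=> z zr; apply: hb'; rewrite inE zr orbT.
Qed.

Lemma in_enumF (M : choiceType) (D : {fset M}) x : (x \in enum_fset D) = (x \in D).
Proof. by []. Qed.

Lemma enumF_ne (M : choiceType) (D : {fset M}) : D != fset0 -> enum_fset D <> [::].
Proof. move=> h e; move: h; apply/negP/negPn/eqP/fsetP => x. by rewrite -in_enumF e. Qed.

Lemma fset1_ne0 (M : choiceType) (x : M) : [fset x] != fset0.
Proof. apply/negP => /eqP e. have : x \in [fset x] by rewrite in_fset1. by rewrite e. Qed.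

Lemma specF_mono (M : choiceType) (j : M -> M -> M) spec : is_mss j spec ->
  forall d s (D : {fset M}), s <> [::] -> {subset s <= D} -> spec d s -> spec d (enum_fset D).
Proof. move=> HM d s D ne sub h; apply: (spec_mono HM ne _ h) => z zs; rewrite in_enumF; exact: sub. Qed.

Lemma spec_self (M : choiceType) (j : M -> M -> M) spec : is_mss j spec ->
  forall (D : {fset M}) e, e \in D -> spec e (enum_fset D).
Proof.
move=> HM D e eD; have HM' := HM; dHM HM'.
apply: (specF_mono HM (s := [:: e]) (D := D) _ _ (M1 e)) => //.
by move=> z; rewrite inE => /eqP ->.
Qed.

Lemma A1_le (M : choiceType) (j : M -> M -> M) spec : is_mss j spec ->
  forall a c (D : {fset M}), leM j a c ->
  (if D == fset0 then leM j a c else exists d, spec d (enum_fset D) /\ leM j a (j c d)).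
Proof.
move=> HM a c D h; case: eqP => // /eqP ne.
case: (fset_0Vmem D) => [D0|[e eD]]; first by rewrite D0 eqxx in ne.
exists e; split; first exact: (spec_self HM).
apply: (le_trans' HM.1 h); exact: (le_jl HM.1).
Qed.

Lemma jACA (M : Type) (j : M -> M -> M) : is_semilattice j ->
  forall a b c d, j (j a b) (j c d) = j (j a c) (j b d).
Proof.
move=> [jA [jC jI]] a b c d.
by rewrite -!jA; congr (j a); rewrite !jA; congr (j _ d); rewrite jC.
Qed.

Lemma prec_refl (M : choiceType) (j : M -> M -> M) spec : is_mss j spec ->
  forall x, prec j spec x x.
Proof.
move=> HM [a B]; have HM' := HM; dHM HM'; split.
  by apply: (A1_le HM); apply: (le_refl' HM.1).
by move=> b bB; exists b.
Qed.

Lemma prec_trans (M : choiceType) (j : M -> M -> M) spec : is_mss j spec ->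
  forall x y z, prec j spec x y -> prec j spec y z -> prec j spec x z.
Proof.
move=> HM [a B] [c D] [e F] [h1 h2] [h3 h4]; have HM' := HM; dHM HM'; have S := HM.1.
split; last first.
  move=> b bB; have [d dD hd] := h2 b bB; have [f fF hf] := h4 d dD.
  by exists f => //; apply: (M2 _ _ [::] _ hd hf).
have [F0|F0] := eqVneq F fset0.
  rewrite F0 eqxx in h3 *.
  have [D0|D0] := eqVneq D fset0.
    rewrite D0 eqxx in h1; exact: (le_trans' S h1 h3).
  case: (fset_0Vmem D) => [D0'|[d dD]]; first by rewrite D0' eqxx in D0.
  by have [f] := h4 d dD; rewrite F0.
rewrite (negbTE F0) in h3 *.
have [f0 [hf0 le0]] := h3.
have [D0|D0] := eqVneq D fset0.
  rewrite D0 eqxx in h1; exists f0; split => //; exact: (le_trans' S h1 le0).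
rewrite (negbTE D0) in h1; have [d [hd led]] := h1.
have hdF : spec d (enum_fset F).
  apply: (spec_repl HM (enumF_ne D0) hd) => b; rewrite in_enumF => /h4 [f fF hf].
  by exists f => //; rewrite in_enumF.
exists (j f0 d); split; first exact: (M7 _ _ _ (enumF_ne F0)).
apply: (le_trans' S led); rewrite jA; apply: (le_mono S le0); exact: (le_refl' S).
Qed.

Lemma prec_mono (M : choiceType) (j : M -> M -> M) spec : is_mss j spec ->
  forall x x' y y', prec j spec x x' -> prec j spec y y' ->
  prec j spec (pjoin j x y) (pjoin j x' y').
Proof.
move=> HM [a B] [a' B'] [c D] [c' D'] [h1 h2] [h3 h4]; have HM' := HM; dHM HM'; have S := HM.1.
rewrite /pjoin /=; split; last first.
  move=> b; rewrite in_fsetU => /orP [/h2|/h4] [d dD hd]; exists d => //;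
  by rewrite in_fsetU dD ?orbT.
have [U0|U0] := eqVneq (B' `|` D') fset0.
  move/eqP: U0; rewrite fsetU_eq0 => /andP [/eqP B0 /eqP D0].
  rewrite B0 D0 eqxx in h1 h3; exact: (le_mono S h1 h3).

have subB : {subset enum_fset B' <= B' `|` D'} by move=> z; rewrite in_enumF in_fsetU => ->.
have subD : {subset enum_fset D' <= B' `|` D'} by move=> z; rewrite in_enumF in_fsetU orbC => ->.
have [B0|B0] := eqVneq B' fset0; have [D0|D0] := eqVneq D' fset0.
- by rewrite B0 D0 fsetU0 eqxx in U0.
- rewrite B0 eqxx in h1; rewrite (negbTE D0) in h3; have [d2 [hd2 le2]] := h3.
  exists d2; split; first exact: (specF_mono HM (enumF_ne D0) subD).
  by rewrite -jA; apply: (le_mono S h1 le2).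
- rewrite D0 eqxx in h3; rewrite (negbTE B0) in h1; have [d1 [hd1 le1]] := h1.
  exists d1; split; first exact: (specF_mono HM (enumF_ne B0) subB).
  rewrite -jA (jC c' d1) jA; apply: (le_mono S le1 h3).
- rewrite (negbTE D0) in h3; rewrite (negbTE B0) in h1.
  have [d1 [hd1 le1]] := h1; have [d2 [hd2 le2]] := h3.
  exists (j d1 d2); split.
    apply: M7; first exact: enumF_ne.
      exact: (specF_mono HM (enumF_ne B0) subB).
    exact: (specF_mono HM (enumF_ne D0) subD).
  rewrite -(jACA S); exact: (le_mono S le1 le2).
Qed.

Lemma prec_jl (M : choiceType) (j : M -> M -> M) spec : is_mss j spec ->
  forall x y, prec j spec x (pjoin j x y).
Proof.
move=> HM [a B] [c D]; have HM' := HM; dHM HM'; split.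
  by apply: (A1_le HM); apply: (le_jl HM.1).
by move=> b bB; exists b => //; rewrite in_fsetU bB.
Qed.

Lemma prec_jr (M : choiceType) (j : M -> M -> M) spec : is_mss j spec ->
  forall x y, prec j spec y (pjoin j x y).
Proof.
move=> HM [a B] [c D]; have HM' := HM; dHM HM'; split.
  by apply: (A1_le HM); apply: (le_jr HM.1).
by move=> b bB; exists b => //; rewrite in_fsetU bB orbT.
Qed.

Lemma foldr_ub (M : eqType) (j : M -> M -> M) : is_semilattice j ->
  forall (c : M) s, leM j c (foldr j c s) /\ (forall z, z \in s -> leM j z (foldr j c s)).
Proof.
move=> S c; elim=> [|x s [IH1 IH2]] /=; first by split => //; exact: (le_refl' S).
split.
  apply: (le_trans' S IH1); exact: (le_jr S).
move=> z; rewrite inE => /orP [/eqP ->|zs]; first exact: (le_jl S).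
apply: (le_trans' S (IH2 z zs)); exact: (le_jr S).
Qed.

Lemma foldr_spec (M : eqType) (j : M -> M -> M) spec : is_mss j spec ->
  forall a e s, spec a [:: e] -> (forall b, b \in s -> spec b [:: e]) ->
  spec (foldr j a s) [:: e].
Proof.
move=> HM a e; have HM' := HM; dHM HM'.
elim=> [|x s IH] //= ha hb; apply: M7 => //.
  by apply: hb; rewrite inE eqxx.
by apply: IH => // b bs; apply: hb; rewrite inE bs orbT.
Qed.

Lemma prec_K (M : choiceType) (j : M -> M -> M) spec : is_mss j spec ->
  forall x y, prec j spec x y -> prec j spec (Kop j x) (Kop j y).
Proof.
move=> HM [a B] [c D] [h1 h2]; have HM' := HM; dHM HM'; have S := HM.1.
rewrite /Kop /=.
set cb := foldr j c (enum_fset D).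
have [Fc FD] := foldr_ub S c (enum_fset D).
have F1 : forall z, leM j z cb -> spec z [:: cb] by move=> z hz; exact: (M3 _ _ _ _ hz (M1 cb)).
have FD' : forall z, z \in D -> spec z [:: cb].
  move=> z zD; apply: F1; apply: FD; by rewrite in_enumF.
have F3 : forall z, spec z [:: cb] -> spec z (enum_fset [fset cb]).
  move=> z hz; apply: (specF_mono HM _ _ hz) => // w; rewrite inE => /eqP ->; by rewrite in_fset1.
have [wit [hw lew]] : exists d, spec d [:: cb] /\ leM j a (j c d).
  have [D0|D0] := eqVneq D fset0.
    rewrite D0 eqxx in h1; exists cb; split; first exact: M1.
    apply: (le_trans' S h1); exact: (le_jl S).
  rewrite (negbTE D0) in h1; have [d [hd led]] := h1.
  exists d; split => //.
  apply: (spec_repl HM (enumF_ne D0) hd) => b; rewrite in_enumF => bD.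
  by exists cb; [rewrite inE | exact: FD'].
rewrite (negbTE (fset1_ne0 cb)); split.
  by exists wit; split => //; apply: F3.
move=> b; rewrite in_fset1 => /eqP ->; exists cb; first by rewrite in_fset1.
apply: (foldr_spec HM).
  apply: (M3 _ _ _ _ lew) => //; apply: M7 => //; exact: F1.
move=> b'; rewrite in_enumF => /h2 [d dD hd]; exact: (M2 _ _ [::] _ hd (FD' d dD)).
Qed.

Theorem lemma4p5 (M : choiceType) (join : M -> M -> M) (spec : M -> seq M -> Prop)
  (HM : is_mss join spec) :
  (* (i) *)
  (forall x, prec join spec x x) /\
  (forall x y z, prec join spec x y -> prec join spec y z -> prec join spec x z) /\
  (forall x, sim join spec x x) /\
  (forall x y, sim join spec x y -> sim join spec y x) /\
  (forall x y z, sim join spec x y -> sim join spec y z -> sim join spec x z) /\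
  (* (ii) *)
  (forall x y, sim join spec x y -> sim join spec (Kop join x) (Kop join y)) /\
  (* (iii) congruence *)
  (forall x x' y y', sim join spec x x' -> sim join spec y y' ->
     sim join spec (pjoin join x y) (pjoin join x' y')) /\
  (* (iii) order of the quotient: [x] <= [y] iff [x] ∨ [y] = [y] iff x ≾ y *)
  (forall x y, sim join spec (pjoin join x y) y <-> prec join spec x y).
Proof.
have R := prec_refl HM; have T := prec_trans HM.
split => //; split => //; split; first by move=> x; split.
split; first by move=> x y [].
split; first by move=> x y z [h1 h2] [h3 h4]; split; [exact: T h1 h3 | exact: T h4 h2].
split; first by move=> x y [h1 h2]; split; apply: prec_K.
split; first by move=> x x' y y' [h1 h2] [h3 h4]; split; apply: prec_mono.
move=> x y; split.
  by move=> [h _]; apply: T h; apply: prec_jl.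
move=> h; split; last exact: prec_jr.
have e : pjoin join y y = y.
  case: y {h} => c D; rewrite /pjoin /= fsetUid; congr pair; exact: HM.1.2.2.
rewrite -{2}e; apply: prec_mono => //.
Qed.
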